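(* Let $R$ be a noetherian commutative ring with unit, let $L$ and $K$ be abelian monoids admitting cancellation, let $B=\bigoplus_{u\in L}B_u$ be an $L$-graded $R$-algebra and $A=\bigoplus_{w\in K}A_w$ a $K$-graded $R$-algebra without zero-divisors, and let $(\varphi,F)$ be a morphism from $B$ to $A$. Assume that the weight monoid $S(B)=\{u\in L;\ B_u\ne 0\}$ is finitely generated and that $\varphi$ restricts to an isomorphism $B_u\to A_{F(u)}$ for every $u\in L$. If $A$ is finitely generated over $R$, then $B$ is finitely generated over $R$.
   Context: For an abelian monoid $K$, a $K$-graded $R$-algebra is an associative commutative $R$-algebra with unit with a decomposition $A=\bigoplus_{w\in K}A_w$ into $R$-submodules with $A_wA_{w'}\subseteq A_{w+w'}$. A morphism from an $L$-graded algebra $B$ to a $K$-graded algebra $A$ is a pair $(\varphi,F)$ where $\varphi\colon B\to A$ is a homomorphism of $R$-algebras and $F\colon L\to K$ is a homomorphism of monoids with $\varphi(B_u)\subseteq A_{F(u)}$ for all $u\in L$. *)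

(* Defs.v *)
From mathcomp Require Import all_boot all_algebra.
Set Implicit Arguments. Unset Strict Implicit. Unset Printing Implicit Defensive.
Import GRing.Theory.
Local Open Scope ring_scope.

Definition is_ideal (R : comNzRingType) (I : R -> Prop) : Prop :=
  [/\ I 0, (forall x y, I x -> I y -> I (x + y)) & (forall r x, I x -> I (r * x))].

Definition in_ideal_span (R : comNzRingType) (s : seq R) (x : R) : Prop :=
  exists c : 'I_(size s) -> R, x = \sum_(i < size s) c i * s`_i.

Definition noetherian (R : comNzRingType) : Prop :=
  forall I : R -> Prop, is_ideal I ->
    exists s : seq R, forall x, I x <-> in_ideal_span s x.

Definition cancellative (L : nmodType) : Prop :=
  forall a b c : L, a + c = b + c -> a = b.

Definition is_submodule (R : comNzRingType) (A : comAlgType R) (M : A -> Prop)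
  : Prop :=
  [/\ M 0, (forall x y, M x -> M y -> M (x + y)) & (forall (r : R) x, M x -> M (r *: x))].

Definition is_grading (R : comNzRingType) (K : nmodType) (A : comAlgType R)
    (Ag : K -> A -> Prop) : Prop :=
  [/\ (forall w, is_submodule (Ag w)),
      (forall a : A, exists (s : seq K) (f : K -> A),
          uniq s /\ (forall w, Ag w (f w)) /\ a = \sum_(w <- s) f w),
      (forall (s : seq K) (f : K -> A), uniq s -> (forall w, Ag w (f w)) ->
          \sum_(w <- s) f w = 0 -> forall w, w \in s -> f w = 0)
    & (forall w w' x y, Ag w x -> Ag w' y -> Ag (w + w') (x * y))].

Definition graded_morphism (R : comNzRingType) (L K : nmodType)
    (B A : comAlgType R) (Bg : L -> B -> Prop) (Ag : K -> A -> Prop)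
    (phi : {lrmorphism B -> A}) (F : {additive L -> K}) : Prop :=
  forall u b, Bg u b -> Ag (F u) (phi b).

Definition no_zero_divisors (R : comNzRingType) (A : comAlgType R) : Prop :=
  forall x y : A, x * y = 0 -> x = 0 \/ y = 0.

Definition weight_monoid (R : comNzRingType) (L : nmodType) (B : comAlgType R)
    (Bg : L -> B -> Prop) (u : L) : Prop :=
  exists b : B, Bg u b /\ b <> 0.

Definition in_submonoid_gen (L : nmodType) (g : seq L) (u : L) : Prop :=
  exists c : 'I_(size g) -> nat, u = \sum_(i < size g) g`_i *+ c i.

Definition fg_monoid (L : nmodType) (S : L -> Prop) : Prop :=
  exists g : seq L, (forall x, x \in g -> S x) /\
    (forall u, S u <-> in_submonoid_gen g u).

Definition in_subalg_gen (R : comNzRingType) (A : comAlgType R) (s : seq A)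
    (a : A) : Prop :=
  forall P : A -> Prop,
    P 1 ->
    (forall x y, P x -> P y -> P (x + y)) ->
    (forall x y, P x -> P y -> P (x * y)) ->
    (forall (r : R) x, P x -> P (r *: x)) ->
    (forall x, x \in s -> P x) ->
    P a.

Definition fg_algebra (R : comNzRingType) (A : comAlgType R) : Prop :=
  exists s : seq A, forall a : A, in_subalg_gen s a.

(* Main.v *)
From Stdlib Require Import Classical. From Stdlib Require List.
Require Import Defs.
From mathcomp Require Import all_boot all_algebra.
Set Implicit Arguments. Unset Strict Implicit. Unset Printing Implicit Defensive.
Import GRing.Theory.
Set Implicit Arguments. Unset Strict Implicit. Unset Printing Implicit Defensive.

Lemma maxseq_ge (n : nat) (MT : seq (nat -> nat)) m :
  List.In m MT -> m n <= foldr (fun m0 acc => maxn (m0 n) acc) 0 MT.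
Proof.
elim: MT => //= a MT IH [->|/IH h]; first by rewrite leq_maxl.
by rewrite (leq_trans h) // leq_maxr.
Qed.

Lemma in_cat_l T (x : T) s1 s2 : List.In x s1 -> List.In x (s1 ++ s2).
Proof. by move=> h; apply: List.in_or_app; left. Qed.
Lemma in_cat_r T (x : T) s1 s2 : List.In x s2 -> List.In x (s1 ++ s2).
Proof. by move=> h; apply: List.in_or_app; right. Qed.

Lemma dickson n : forall (P : (nat -> nat) -> Prop), exists M : seq (nat -> nat),
  (forall m, List.In m M -> P m) /\
  (forall x, P x -> exists m, List.In m M /\ forall i, i < n -> m i <= x i).
Proof.
elim: n => [|n IH] P.
  case: (classic (exists x, P x)) => [[x Px]|nx].
    exists [:: x]; split; first by move=> m [<-|].
    by move=> y _; exists x; split; [left|].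
  exists [::]; split => // x Px; case: nx; by exists x.
have [MT [MTP MTx]] := IH P.
set H := foldr (fun m0 acc => maxn (m0 n) acc) 0 MT.
have slices : forall H0, exists Ms : seq (nat -> nat), (forall m, List.In m Ms -> P m) /\
   forall x, P x -> x n < H0 -> exists m, List.In m Ms /\ (forall i, i < n -> m i <= x i) /\ m n = x n.
  elim=> [|H0 [Ms [MsP Msx]]]; first by exists [::].
  have [MH [MHP MHx]] := IH (fun x => P x /\ x n = H0).
  exists (MH ++ Ms); split.
    by move=> m /(List.in_app_or _ _ _) [/MHP []|/MsP].
  move=> x Px; rewrite ltnS leq_eqVlt => /orP [/eqP e|lt].
    have [m [mi mle]] := MHx x (conj Px e).
    exists m; split; first exact: in_cat_l.
    by split => //; have [_ ->] := MHP _ mi.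
  have [m [mi mle]] := Msx x Px lt; exists m; split => //; exact: in_cat_r.
have [Ms [MsP Msx]] := slices H.
exists (MT ++ Ms); split; first by move=> m /(List.in_app_or _ _ _) [/MTP|/MsP].
move=> x Px; have [m [mi mle]] := MTx x Px.
case: (leqP (m n) (x n)) => h.
  exists m; split; first exact: in_cat_l.
  move=> i; rewrite ltnS leq_eqVlt => /orP [/eqP ->|]; [exact: h|exact: mle].
have [m' [m'i [m'le m'n]]] := Msx x Px (leq_trans h (maxseq_ge n mi)).
exists m'; split; first exact: in_cat_r.
move=> i; rewrite ltnS leq_eqVlt => /orP [/eqP ->|]; [by rewrite m'n|exact: m'le].
Qed.

Lemma decomp n (P : (nat -> nat) -> Prop) :
  (forall x y, P x -> P y -> (forall i, i < n -> y i <= x i) -> P (fun i => x i - y i)) ->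
  exists G : seq (nat -> nat), (forall h, List.In h G -> P h) /\
    forall x, P x -> exists l : seq (nat -> nat), (forall h, List.In h l -> List.In h G) /\
      forall i, i < n -> x i = \sum_(h <- l) h i.
Proof.
move=> Psub.
have [M [MP Mx]] := dickson n (fun x => P x /\ exists i, i < n /\ 0 < x i).
exists M; split; first by move=> h /MP [].
suff: forall N (x : nat -> nat), \sum_(i < n) x i <= N -> P x -> exists l : seq (nat -> nat),
   (forall h, List.In h l -> List.In h M) /\ forall i, i < n -> x i = \sum_(h <- l) h i.
  by move=> H x; apply: (H _ x (leqnn _)).
elim=> [|N IHN] x xN Px.
  exists [::]; split => // i lti; rewrite big_nil.
  move: xN; rewrite leqn0 sum_nat_eq0 => /forallP /(_ (Ordinal lti)) /=.
  by move/eqP.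
case: (classic (exists i, i < n /\ 0 < x i)) => [ex|nex].
  have [m [mi mle]] := Mx x (conj Px ex).
  have [Pm [j [ltj mj]]] := MP _ mi.
  have Py := Psub x m Px Pm mle.
  have hsum : \sum_(i < n) (x i - m i) + \sum_(i < n) m i = \sum_(i < n) x i.
    rewrite -big_split /=; apply: eq_bigr => i _; by rewrite subnK // mle.
  have hm : 0 < \sum_(i < n) m i.
    by rewrite (bigD1 (Ordinal ltj)) //= ltn_addr.
  have hN : \sum_(i < n) (x i - m i) <= N.
    rewrite -ltnS; apply: leq_trans xN; rewrite -hsum; by rewrite -addn1 leq_add2l.
  have [l [lM lx]] := IHN _ hN Py.
  exists (m :: l); split; first by move=> h [<-|/lM].
  move=> i lti; rewrite big_cons -lx // subnKC //; exact: mle.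
exists [::]; split => // i lti; rewrite big_nil.
case: (posnP (x i)) => // hp; case: nex; by exists i.
Qed.
Local Open Scope ring_scope.

Lemma sum_pred1_seq (V : nmodType) (K : eqType) (D : seq K) (k0 : K) (c : V) :
  uniq D -> k0 \in D -> \sum_(k <- D | k0 == k) c = c.
Proof.
move=> uD kD; rewrite big_const_seq.
have -> : count (fun k => k0 == k) D = 1%N.
  rewrite (eq_count (a2 := pred1 k0)); last by move=> k /=; rewrite eq_sym.
  by rewrite count_uniq_mem // kD.
by rewrite /= addr0.
Qed.

Lemma sum_partition_gen (V : nmodType) (K : eqType) (I : Type) (D : seq K) (s : seq I)
    (d : I -> K) (y : I -> V) : uniq D -> all (mem D) (map d s) ->
  \sum_(k <- D) \sum_(i <- s | d i == k) y i = \sum_(i <- s) y i.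
Proof.
move=> uD; elim: s => [|i s IH] /=; first by rewrite big_nil big1 // => k _; rewrite big_nil.
move=> /andP [iD sD]; rewrite big_cons -IH //.
rewrite -[y i](sum_pred1_seq _ uD iD) [X in X + _]big_mkcond /=.
rewrite -big_split /=; apply: eq_bigr => k _; rewrite big_cons.
case: ifP => _ //; by rewrite add0r.
Qed.

Lemma sum_partition (V : nmodType) (K : eqType) (I : Type) (s : seq I)
    (d : I -> K) (y : I -> V) :
  \sum_(k <- undup (map d s)) \sum_(i <- s | d i == k) y i = \sum_(i <- s) y i.
Proof.
apply: sum_partition_gen; first exact: undup_uniq.
by apply/allP => k; rewrite /= mem_undup.
Qed.

Lemma grad0 (R : comNzRingType) (K : nmodType) (A : comAlgType R) (Ag : K -> A -> Prop) w :
  is_grading Ag -> Ag w 0.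
Proof. by case=> /(_ w) [] . Qed.

Lemma gradD (R : comNzRingType) (K : nmodType) (A : comAlgType R) (Ag : K -> A -> Prop) w x y :
  is_grading Ag -> Ag w x -> Ag w y -> Ag w (x + y).
Proof. by case=> /(_ w) [_ h _] _ _ _; apply: h. Qed.

Lemma gradZ (R : comNzRingType) (K : nmodType) (A : comAlgType R) (Ag : K -> A -> Prop) w (r : R) x :
  is_grading Ag -> Ag w x -> Ag w (r *: x).
Proof. by case=> /(_ w) [_ _ h] _ _ _; apply: h. Qed.

Lemma gradM (R : comNzRingType) (K : nmodType) (A : comAlgType R) (Ag : K -> A -> Prop) w w' x y :
  is_grading Ag -> Ag w x -> Ag w' y -> Ag (w + w') (x * y).
Proof. by case=> _ _ _ h; apply: h. Qed.

Lemma grad_sum (R : comNzRingType) (K : nmodType) (A : comAlgType R) (Ag : K -> A -> Prop)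
   (I : Type) (s : seq I) (P : pred I) (y : I -> A) w :
  is_grading Ag -> (forall i, P i -> Ag w (y i)) -> Ag w (\sum_(i <- s | P i) y i).
Proof.
move=> hA hy; elim/big_ind: _ => [|a b ha hb|i Pi]; [exact: grad0|exact: gradD|exact: hy].
Qed.

Lemma direct_gen (R : comNzRingType) (K : nmodType) (A : comAlgType R) (Ag : K -> A -> Prop)
   (I : Type) (s : seq I) (d : I -> K) (y : I -> A) :
  is_grading Ag -> (forall i, Ag (d i) (y i)) -> \sum_(i <- s) y i = 0 ->
  forall k, \sum_(i <- s | d i == k) y i = 0.
Proof.
move=> hA hy hs k; have [_ _ hdir _] := hA.
set D := undup (k :: map d s).
have uD : uniq D by exact: undup_uniq.
apply: (hdir D (fun k => \sum_(i <- s | d i == k) y i) uD _ _ k).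
- move=> w; apply: grad_sum => // i /eqP <-; exact: hy.
- rewrite sum_partition_gen //; apply/allP => w wi; rewrite /= mem_undup in_cons.
  by rewrite wi orbT.
- by rewrite mem_undup mem_head.
Qed.

Lemma grad1 (R : comNzRingType) (K : nmodType) (A : comAlgType R) (Ag : K -> A -> Prop) :
  is_grading Ag -> cancellative K -> Ag 0 1.
Proof.
move=> hA hK; have [hsub hdec hdir hmul] := hA.
have [s [e [us [he e1]]]] := hdec 1.
have claim : forall v x w, Ag v x -> w \in s -> w != 0 -> x * e w = 0.
  move=> v x w hx ws wn0.
  pose d := fun o : option K => if o is Some w' then v + w' else v.
  pose y := fun o : option K => if o is Some w' then x * e w' else - x.
  have hy : forall o, Ag (d o) (y o).
    case=> [w'|] /=; first exact: hmul.
    by rewrite -scaleN1r; apply: gradZ.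
  have hsum : \sum_(o <- None :: map Some s) y o = 0.
    by rewrite big_cons big_map /= -mulr_sumr -e1 mulr1 addNr.
  have := direct_gen hA hy hsum (v + w).
  rewrite big_cons big_map /=.
  have -> : (v == v + w) = false.
    apply/negbTE/eqP => h; move/eqP: wn0; apply.
    apply: (hK _ _ v); by rewrite add0r addrC -h.
  rewrite (eq_bigl (fun w' => w == w')); last first.
    move=> w' /=; apply/eqP/eqP => [h|<-] //.
    by apply: (hK _ _ v); rewrite addrC -h addrC.
  rewrite (eq_bigr (fun _ => x * e w)); last by move=> w' /eqP <-.
  by rewrite sum_pred1_seq.
have ew0 : forall w, w \in s -> w != 0 -> e w = 0.
  move=> w ws wn0; rewrite -[e w]mul1r e1 mulr_suml.
  by apply: big1_seq => w' /andP [_ w's]; apply: (claim w'); [exact: he| |].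
rewrite e1 (bigID (fun w => w == 0)) /= [X in _ + X]big1_seq ?addr0.
  by apply: grad_sum => // w /eqP <-.
by move=> w /andP [wn0 ws]; apply: ew0.
Qed.

Lemma grad_expr (R : comNzRingType) (K : nmodType) (A : comAlgType R) (Ag : K -> A -> Prop) w x n :
  is_grading Ag -> cancellative K -> Ag w x -> Ag (w *+ n) (x ^+ n).
Proof.
move=> hA hK hx; elim: n => [|n IH]; first by rewrite mulr0n expr0; exact: grad1.
by rewrite mulrS exprS; apply: gradM.
Qed.

Lemma grad_prod (R : comNzRingType) (K : nmodType) (A : comAlgType R) (Ag : K -> A -> Prop)
   (I : Type) (s : seq I) (d : I -> K) (y : I -> A) :
  is_grading Ag -> cancellative K -> (forall i, Ag (d i) (y i)) ->
  Ag (\sum_(i <- s) d i) (\prod_(i <- s) y i).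
Proof.
move=> hA hK hy; apply: (big_ind2 Ag); [exact: grad1| |by move=> i _; exact: hy].
by move=> ? ? ? ?; apply: gradM.
Qed.

Definition mono (R : comNzRingType) (A : comAlgType R) (f : nat -> A) (r : nat) (e : nat -> nat) : A :=
  \prod_(i < r) f i ^+ e i.
Definition degv (K : nmodType) (w : nat -> K) (r : nat) (e : nat -> nat) : K :=
  \sum_(i < r) w i *+ e i.
Definition Qspan (R : comNzRingType) (A : comAlgType R) (f : nat -> A) (r : nat) (a : A) :=
  exists E : seq (R * (nat -> nat)), a = \sum_(p <- E) p.1 *: mono f r p.2.

Lemma mono_add (R : comNzRingType) (A : comAlgType R) (f : nat -> A) r e e' :
  mono f r (fun i => (e i + e' i)%N) = mono f r e * mono f r e'.
Proof. by rewrite /mono -big_split /=; apply: eq_bigr => i _; rewrite exprD. Qed.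

Lemma Qspan1 (R : comNzRingType) (A : comAlgType R) (f : nat -> A) r : Qspan f r 1.
Proof.
exists [:: (1, fun _ => 0%N)]; rewrite big_cons big_nil addr0 scale1r /mono /=.
by rewrite big1 // => i _; rewrite expr0.
Qed.

Lemma Qspan0 (R : comNzRingType) (A : comAlgType R) (f : nat -> A) r : Qspan f r 0.
Proof. by exists [::]; rewrite big_nil. Qed.

Lemma QspanD (R : comNzRingType) (A : comAlgType R) (f : nat -> A) r x y :
  Qspan f r x -> Qspan f r y -> Qspan f r (x + y).
Proof. by move=> [E1 ->] [E2 ->]; exists (E1 ++ E2); rewrite big_cat. Qed.

Lemma QspanZ (R : comNzRingType) (A : comAlgType R) (f : nat -> A) r (c : R) x :
  Qspan f r x -> Qspan f r (c *: x).
Proof.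
move=> [E ->]; exists [seq (c * p.1, p.2) | p <- E].
by rewrite big_map scaler_sumr; apply: eq_bigr => p _ /=; rewrite scalerA.
Qed.

Lemma QspanM (R : comNzRingType) (A : comAlgType R) (f : nat -> A) r x y :
  Qspan f r x -> Qspan f r y -> Qspan f r (x * y).
Proof.
move=> [E1 ->] [E2 ->].
exists [seq (p.1 * q.1, fun i => (p.2 i + q.2 i)%N) | p <- E1, q <- E2].
rewrite big_allpairs_dep /= mulr_suml; apply: eq_bigr => p _.
rewrite mulr_sumr; apply: eq_bigr => q _ /=.
by rewrite mono_add -scalerA -scalerAl -scalerAr.
Qed.

Lemma Qspan_gen (R : comNzRingType) (A : comAlgType R) (f : nat -> A) (r i : nat) :
  (i < r)%N -> Qspan f r (f i).
Proof.
move=> ir; exists [:: (1, fun j => (j == i)%N : nat)]; rewrite big_cons big_nil addr0 scale1r /mono /=.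
rewrite (bigD1 (Ordinal ir)) //= eqxx expr1 big1 ?mulr1 // => j /= ji.
by rewrite (_ : (nat_of_ord j == i) = false) ?expr0 //; apply/negbTE.
Qed.

Lemma Qspan_sum (R : comNzRingType) (A : comAlgType R) (f : nat -> A) r (I : Type) (s : seq I) (y : I -> A) :
  (forall i, Qspan f r (y i)) -> Qspan f r (\sum_(i <- s) y i).
Proof.
move=> hy; elim: s => [|i s IH]; first by rewrite big_nil; exact: Qspan0.
by rewrite big_cons; apply: QspanD.
Qed.

Lemma grad_mono (R : comNzRingType) (K : nmodType) (A : comAlgType R) (Ag : K -> A -> Prop)
   (f : nat -> A) (w : nat -> K) r e :
  is_grading Ag -> cancellative K -> (forall i, (i < r)%N -> Ag (w i) (f i)) ->
  Ag (degv w r e) (mono f r e).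
Proof.
move=> hA hK hf; rewrite /degv /mono.
apply: (@grad_prod _ _ _ _ _ _ (fun i : 'I_r => w i *+ e i)) => // i.
by apply: grad_expr => //; apply: hf.
Qed.

Lemma homog_comp (R : comNzRingType) (K : nmodType) (A : comAlgType R) (Ag : K -> A -> Prop)
   (f : nat -> A) (w : nat -> K) r (E : seq (R * (nat -> nat))) k a :
  is_grading Ag -> cancellative K -> (forall i, (i < r)%N -> Ag (w i) (f i)) ->
  Ag k a -> a = \sum_(p <- E) p.1 *: mono f r p.2 ->
  a = \sum_(p <- E | degv w r p.2 == k) p.1 *: mono f r p.2.
Proof.
move=> hA hK hf ha aE.
pose d := fun o : option (R * (nat -> nat)) => if o is Some p then degv w r p.2 else k.
pose y := fun o : option (R * (nat -> nat)) => if o is Some p then p.1 *: mono f r p.2 else - a.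
have hy : forall o, Ag (d o) (y o).
  case=> [p|] /=; first by apply: gradZ => //; apply: grad_mono.
  by rewrite -scaleN1r; apply: gradZ.
have hsum : \sum_(o <- None :: map Some E) y o = 0.
  by rewrite big_cons big_map /= -aE addNr.
have := direct_gen hA hy hsum k.
rewrite big_cons big_map /= eqxx => /eqP.
by rewrite addrC subr_eq0 => /eqP ->.
Qed.

Lemma hom_gens (R : comNzRingType) (K : nmodType) (A : comAlgType R) (Ag : K -> A -> Prop) :
  is_grading Ag -> fg_algebra A ->
  exists r (f : nat -> A) (w : nat -> K), (forall i, (i < r)%N -> Ag (w i) (f i)) /\
     forall a, Qspan f r a.
Proof.
move=> hA [s hs]; have [_ hdec _ _] := hA.
have : exists gens : seq (K * A), (forall p, p \in gens -> Ag p.1 p.2) /\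
   forall x, x \in s -> exists l : seq (K * A), (forall p, p \in l -> p \in gens) /\
     x = \sum_(p <- l) p.2.
  elim: s {hs} => [|x s [gens [gG gs]]]; first by exists [::].
  have [sx [fx [_ [hfx ->]]]] := hdec x.
  exists ([seq (w, fx w) | w <- sx] ++ gens); split.
    move=> p; rewrite mem_cat => /orP [/mapP [w _ ->] //|]; exact: gG.
  move=> x'; rewrite in_cons => /orP [/eqP ->|x's].
    exists [seq (w, fx w) | w <- sx]; split; first by move=> p pin; rewrite mem_cat pin.
    by rewrite big_map.
  have [l [lg ->]] := gs x' x's; exists l; split => // p /lg pg; by rewrite mem_cat pg orbT.
move=> [gens [gG gs]].
exists (size gens), (fun i => (nth (0, 0) gens i).2), (fun i => (nth (0, 0) gens i).1).
split; first by move=> i ir; apply: gG; apply: mem_nth.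
have Qg : forall p, p \in gens -> Qspan (fun i => (nth (0, 0) gens i).2) (size gens) p.2.
  move=> p pg; rewrite -(nth_index (0, 0) pg); apply: Qspan_gen; by rewrite index_mem.
move=> a; apply: (hs a).
- exact: Qspan1.
- by move=> ? ? ; apply: QspanD.
- by move=> ? ?; apply: QspanM.
- by move=> ? ?; apply: QspanZ.
move=> x xs; have [l [lg ->]] := gs x xs.
elim: l lg => [|p l IH] lg; first by rewrite big_nil; exact: Qspan0.
rewrite big_cons; apply: QspanD; first by apply: Qg; apply: lg; exact: mem_head.
by apply: IH => q qin; apply: lg; rewrite in_cons qin orbT.
Qed.

Theorem proposition1p1p2p6
  (R : comNzRingType) (L K : nmodType)
  (B A : comAlgType R) (Bg : L -> B -> Prop) (Ag : K -> A -> Prop)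
  (phi : {lrmorphism B -> A}) (F : {additive L -> K}) :
  noetherian R ->
  cancellative L -> cancellative K ->
  is_grading Bg -> is_grading Ag ->
  no_zero_divisors A ->
  graded_morphism Bg Ag phi F ->
  fg_monoid (weight_monoid Bg) ->
  (forall u : L,
     (forall b b' : B, Bg u b -> Bg u b' -> phi b = phi b' -> b = b') /\
     (forall a : A, Ag (F u) a -> exists2 b : B, Bg u b & phi b = a)) ->
  fg_algebra A ->
  fg_algebra B.
Proof.
move=> _ hL hK hB hA _ hphi [g [gS gE]] hiso hfgA.
have [r [f [w [hf hQ]]]] := hom_gens hA hfgA.
pose m := size g.
pose n := (r + m)%N.
pose uvec (v : nat -> nat) : L := \sum_(j < m) g`_j *+ v (r + j)%N.
pose P v := degv w r v = F (uvec v).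
have Psub : forall x y, P x -> P y -> (forall i, (i < n)%N -> (y i <= x i)%N) ->
    P (fun i => x i - y i)%N.
  move=> x y Px Py hle.
  have hdeg : degv w r x = degv w r (fun i => x i - y i)%N + degv w r y.
    rewrite /degv -big_split /=; apply: eq_bigr => i _.
    rewrite -mulrnDr subnK //; apply: hle; exact: ltn_addr.
  have huv : uvec x = uvec (fun i => x i - y i)%N + uvec y.
    rewrite /uvec -big_split /=; apply: eq_bigr => j _.
    rewrite -mulrnDr subnK //; apply: hle; by rewrite ltn_add2l ltn_ord.
  apply: (hK _ _ (degv w r y)); rewrite /P -hdeg Px huv raddfD /=.
  by rewrite Py.
have [G [GP Gx]] := decomp Psub.
have [cs hcs] : exists cs : seq B, forall h, List.In h G ->
    exists c, c \in cs /\ Bg (uvec h) c /\ phi c = mono f r h.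
  elim: G {Gx} GP => [|h G IH] GP; first by exists [::].
  have [cs hcs] := IH (fun h' hi => GP h' (or_intror hi)).
  have hm : Ag (F (uvec h)) (mono f r h).
    rewrite -(GP h (or_introl erefl)); exact: grad_mono.
  have [c hc hpc] := (hiso (uvec h)).2 _ hm.
  exists (c :: cs) => h' [<-|hi].
    by exists c; rewrite mem_head.
  have [c' [c'in hc']] := hcs h' hi; exists c'; by rewrite in_cons c'in orbT.
exists cs => b Pr P1 PD PM PZ Pcs.
have Pr0 : Pr 0 by rewrite -(scale0r 1); apply: PZ.
have key : forall u bu, Bg u bu -> Pr bu.
  move=> u bu hbu; have [->|nz] := eqVneq bu 0; first exact: Pr0.
  have : weight_monoid Bg u by exists bu; split => //; apply/eqP.
  move/gE => [c hc].
  have hphiu : Ag (F u) (phi bu) := hphi u bu hbu.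
  have [E hE] := hQ (phi bu).
  have hcomp := homog_comp hA hK hf hphiu hE.
  have claim : forall e, degv w r e = F u -> exists beta, Bg u beta /\ phi beta = mono f r e /\ Pr beta.
    move=> e he.
    pose c' := fun j : nat => if (insub j : option 'I_m) is Some o then c o else 0%N.
    pose x := fun i : nat => if (i < r)%N then e i else c' (i - r)%N.
    have hxe : forall i, (i < r)%N -> x i = e i by move=> i ir; rewrite /x ir.
    have hxc : forall j : 'I_m, x (r + j)%N = c j.
      move=> j; rewrite /x ltnNge leq_addr /= addKn /c' valK.
      by [].
    have hux : uvec x = u by rewrite hc /uvec; apply: eq_bigr => j _; rewrite hxc.
    have hdx : degv w r x = degv w r e by apply: eq_bigr => i _; rewrite hxe.
    have Px : P x by rewrite /P hux hdx.
    have [l [lG lx]] := Gx x Px.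
    have sub : forall l', (forall h, List.In h l' -> List.In h G) ->
        exists beta, Bg (\sum_(h <- l') uvec h) beta /\ phi beta = \prod_(h <- l') mono f r h /\ Pr beta.
      elim=> [|h l' IH] hl'.
        exists 1; rewrite !big_nil rmorph1; split => //; exact: grad1.
      have [beta [hb [pb Pb]]] := IH (fun h0 hi => hl' h0 (or_intror hi)).
      have [c0 [c0in [hc0 pc0]]] := hcs h (hl' h (or_introl erefl)).
      exists (c0 * beta); rewrite !big_cons; split; first exact: gradM.
      split; last by apply: PM => //; apply: Pcs.
      by rewrite (rmorphM phi); congr (_ * _); [exact: pc0|exact: pb].
    have [beta [hb [pb Pb]]] := sub l lG.
    exists beta; split; last split => //.
      suff <- : \sum_(h <- l) uvec h = u by [].
      rewrite -hux /uvec exchange_big /=; apply: eq_bigr => j _.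
      rewrite sumrMnr -lx //; by rewrite /n ltn_add2l ltn_ord.
    rewrite pb; rewrite /mono exchange_big /=; apply: eq_bigr => i _.
    rewrite prodrXr -lx //; [by rewrite hxe | by apply: ltn_addr].
  have [b' [hb' [pb' Pb']]] : exists b', Bg u b' /\
      phi b' = \sum_(p <- E | degv w r p.2 == F u) p.1 *: mono f r p.2 /\ Pr b'.
    elim: (E) => [|p E' [b1 [hb1 [pb1 Pb1]]]].
      exists 0; rewrite big_nil raddf0; split => //; exact: grad0.
    rewrite big_cons; case: eqP => hp; last by exists b1.
    have [beta [hbeta [pbeta Pbeta]]] := claim _ hp.
    exists (p.1 *: beta + b1); split; first by apply: gradD => //; apply: gradZ.
    split; last by apply: PD => //; apply: PZ.
    by rewrite raddfD /= linearZ /= pbeta pb1.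
  have -> : bu = b' by apply: (hiso u).1 => //; rewrite pb' -hcomp.
  exact: Pb'.
have [_ hdec _ _] := hB.
have [su [fb [_ [hfb ->]]]] := hdec b.
elim: su => [|u su IH]; first by rewrite big_nil.
rewrite big_cons; apply: PD => //; exact: (key u).
Qed.
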